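(* Let $F=(f_1,\dots,f_q)^\top:\mathbb{R}^n\to\mathbb{R}^q$, let $Y\subseteq\mathbb{R}^n$ be a finite nonempty set, let $y\in\mathbb{R}^n$ and $\nu>0$. Let $f_{\min},f_{\max}\in\mathbb{R}^q$ satisfy $f_{\min}\le F(x)\le f_{\max}$ componentwise for all $x\in Y\cup\{y\}$, and let the reference point be $\rho=f_{\max}+s\mathbf{1}$ with $s\ge\max_{i=1,\dots,q}\big((f_{\max})_i-(f_{\min})_i\big)$ and $s>0$. If \[ F(y)\not> F(x)-\nu\mathbf{1}\qquad\text{for all } x\in Y, \] i.e. for every $x\in Y$ there is an index $\ell$ with $f_\ell(y)\le f_\ell(x)-\nu$, then \[ HI(F(Y\cup\{y\}))-HI(F(Y))\ge\nu^q . \]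
   Context: Vector order conventions for $u,v\in\mathbb{R}^q$: $u>v$ means $u_i>v_i$ for all $i$, and $u\not>v$ is its negation; $\le$ between vectors in the hypotheses means componentwise inequality. $\mathbf{1}$ denotes the all-ones vector in $\mathbb{R}^q$. For a set $Y\subseteq\mathbb{R}^n$, $F(Y)=\{F(x):x\in Y\}$. For a finite set $A\subset\mathbb{R}^q$ and a reference point $\rho\in\mathbb{R}^q$ with $a_i\le\rho_i$ for all $a\in A$ and all $i$, the hypervolume indicator is $HI(A)=\mathrm{vol}\big(\bigcup_{a\in A}[a,\rho]\big)$, where $[a,\rho]=\{w\in\mathbb{R}^q: a_i\le w_i\le\rho_i,\ i=1,\dots,q\}$ and $\mathrm{vol}$ is Lebesgue measure on $\mathbb{R}^q$. *)

(* Defs.v *)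
From HB Require Import structures.
From mathcomp Require Import all_boot all_order all_algebra.
From mathcomp Require Import all_classical all_reals all_analysis.
Set Implicit Arguments. Unset Strict Implicit. Unset Printing Implicit Defensive.
Import Order.TTheory GRing.Theory Num.Theory.
Local Open Scope ring_scope.
Local Open Scope classical_set_scope.

(* Vectors of R^q are row vectors 'rV[R]_q; coordinate i of u is u 0 i. *)

Definition vgt (R : realType) (q : nat) (u v : 'rV[R]_q) : Prop :=
  forall i : 'I_q, v 0 i < u 0 i.

(* Iterated Lebesgue integration over n real coordinates (the first
   coordinate is integrated outermost); this is exactly the unfolding of the
   iterated product measure lebesgue_measure \x ... \x lebesgue_measure. *)
Fixpoint iter_lebesgue_int (R : realType) (n : nat)
    (g : seq R -> \bar R) : \bar R :=
  match n with
  | 0 => g [::]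
  | n'.+1 => (\int[@lebesgue_measure R]_x
                 iter_lebesgue_int n' (fun s => g (x :: s)))%E
  end.

Definition lebesgue_vol (R : realType) (q : nat) (A : set 'rV[R]_q) : \bar R :=
  iter_lebesgue_int q
    (fun s => ((\1_A (\row_(i < q) nth 0 s i) : R))%:E).

Definition box (R : realType) (q : nat) (a rho : 'rV[R]_q) : set 'rV[R]_q :=
  [set w | forall i : 'I_q, a 0 i <= w 0 i <= rho 0 i].

Definition HI (R : realType) (q : nat) (rho : 'rV[R]_q) (A : seq 'rV[R]_q)
  : \bar R :=
  lebesgue_vol [set w | exists2 a, a \in A & box a rho w].

(* Main.v *)
Require Import Defs.
From HB Require Import structures.
From mathcomp Require Import all_boot all_order all_algebra.
From mathcomp Require Import all_classical all_reals all_analysis.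
From mathcomp Require Import lra.
Import Order.TTheory GRing.Theory Num.Theory.
Local Open Scope ring_scope.
Section Helpers.
Local Open Scope classical_set_scope.
Local Open Scope ereal_scope.

Lemma sup_superadd (R : realType) (A B C : set (\bar R)) :
  A 0 -> B 0 -> (forall a, A a -> 0 <= a) -> (forall b, B b -> 0 <= b) ->
  (forall a b, A a -> B b -> a + b <= ereal_sup C) ->
  ereal_sup A + ereal_sup B <= ereal_sup C.
Proof.
move=> A0 B0 Ap Bp H.
set SC := ereal_sup C.
have [->|] := eqVneq SC +oo; first exact: leey.
move=> SCoo.
have SC0 : 0 <= SC by have := H 0 0 A0 B0; rewrite adde0.
have SCfin : SC \is a fin_num by rewrite ge0_fin_numE // ltey.
have Afin a : A a -> a \is a fin_num.
  move=> Aa; have := H a 0 Aa B0; rewrite adde0 => aC.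
  by rewrite ge0_fin_numE ?Ap // (le_lt_trans aC) // ltey.
have SBle a : A a -> ereal_sup B <= SC - a.
  move=> Aa; apply: ge_ereal_sup => b Bb.
  by rewrite leeBrDl ?Afin // H.
have SB0 : 0 <= ereal_sup B by exact: ereal_sup_ubound.
have SBfin : ereal_sup B \is a fin_num.
  rewrite ge0_fin_numE // (le_lt_trans (SBle 0 A0)) // sube0 ltey //.
rewrite -leeBrDr //; apply: ge_ereal_sup => a Aa.
by rewrite leeBrDr // addeC -leeBrDr ?Afin // SBle.
Qed.

Section iter.
Context {R : realType}.
Local Notation mu := (@lebesgue_measure R).

Lemma int_le (f g : R -> \bar R) : (forall x, 0 <= f x) -> (forall x, f x <= g x) ->
  \int[mu]_x f x <= \int[mu]_x g x.
Proof.
move=> f0 fg; have g0 x : 0 <= g x by apply: le_trans (fg x).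
rewrite !ge0_integralTE //; apply: ereal_sup_le => _ [h hf <-].
by exists h => // x; apply: le_trans (fg x).
Qed.

Lemma int_superadd (f g : R -> \bar R) : (forall x, 0 <= f x) -> (forall x, 0 <= g x) ->
  \int[mu]_x f x + \int[mu]_x g x <= \int[mu]_x (f x + g x).
Proof.
move=> f0 g0; rewrite !ge0_integralTE //; last by move=> x; rewrite adde_ge0.
apply: sup_superadd.
- by exists nnsfun0 => //; rewrite sintegral0.
- by exists nnsfun0 => //; rewrite sintegral0.
- by move=> _ [h _ <-]; exact: sintegral_ge0.
- by move=> _ [h _ <-]; exact: sintegral_ge0.
move=> _ _ [h1 h1f <-] [h2 h2g <-]; apply: ereal_sup_ubound.
exists (add_nnsfun h1 h2); last exact: sintegralD.
by move=> x /=; rewrite EFinD leeD.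
Qed.

Lemma iter_ge0 n (g : seq R -> \bar R) : (forall s, 0 <= g s) -> 0 <= iter_lebesgue_int n g.
Proof.
elim: n g => [|n IH] g g0 /=; first exact: g0.
by apply: integral_ge0 => x _; apply: IH.
Qed.

Lemma iter_le n (g1 g2 : seq R -> \bar R) : (forall s, 0 <= g1 s) ->
  (forall s, g1 s <= g2 s) -> iter_lebesgue_int n g1 <= iter_lebesgue_int n g2.
Proof.
elim: n g1 g2 => [|n IH] g1 g2 g0 g12 /=; first exact: g12.
apply: int_le => x; first exact: iter_ge0.
by apply: IH.
Qed.

Lemma iter_superadd n (g1 g2 : seq R -> \bar R) : (forall s, 0 <= g1 s) ->
  (forall s, 0 <= g2 s) ->
  iter_lebesgue_int n g1 + iter_lebesgue_int n g2 <=
  iter_lebesgue_int n (fun s => g1 s + g2 s).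
Proof.
elim: n g1 g2 => [|n IH] g1 g2 g10 g20 /=; first by [].
apply: (le_trans (int_superadd
   (fun x => iter_lebesgue_int n (fun s => g1 (x :: s)))
   (fun x => iter_lebesgue_int n (fun s => g2 (x :: s))) _ _)); try by move=> x; exact: iter_ge0.
apply: int_le => x; first by rewrite adde_ge0 // iter_ge0.
exact: IH.
Qed.

Lemma iter_cst0 n : iter_lebesgue_int n (fun _ : seq R => 0) = 0.
Proof.
elim: n => [|n IH] //=.
under eq_integral do rewrite IH.
exact: integral0.
Qed.

Definition ind (a w x : R) : R := \1_(`[a, (a + w)%R[) x.

Lemma ind1 a w x : (a <= x < a + w)%R -> ind a w x = 1%R.
Proof. by move=> h; rewrite /ind indicE mem_set //= in_itv /=. Qed.

Lemma ind0 a w x : ~ (a <= x < a + w)%R -> ind a w x = 0%R.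
Proof. by move=> h; rewrite /ind indicE memNset //= in_itv /=; exact/negP. Qed.

Lemma ind_ge0 a w x : (0 <= ind a w x)%R.
Proof. by rewrite /ind indicE. Qed.

Lemma prod_ind1 n (a t : 'I_n -> R) w : (forall i, a i <= t i < a i + w)%R ->
  (\prod_(i < n) ind (a i) w (t i) = 1)%R.
Proof. by move=> h; apply: big1 => i _; apply: ind1. Qed.

Lemma prod_ind0 n (a t : 'I_n -> R) w : ~ (forall i, a i <= t i < a i + w)%R ->
  (\prod_(i < n) ind (a i) w (t i) = 0)%R.
Proof.
move=> /existsNP [i hi]; rewrite (bigD1 i) //= ind0 // mul0r //.
Qed.

Lemma prod_ind_ge0 n (a t : 'I_n -> R) w : (0 <= \prod_(i < n) ind (a i) w (t i))%R.
Proof. by apply: prodr_ge0 => i _; exact: ind_ge0. Qed.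

Lemma iter_box n (a : 'I_n -> R) (w : R) : (0 < w)%R ->
  iter_lebesgue_int n (fun s => (\prod_(i < n) ind (a i) w (nth 0%R s i))%:E)
  = (w ^+ n)%:E.
Proof.
move=> w0; elim: n a => [|n IH] a /=; first by rewrite big_ord0 expr0.
have -> : (fun x => iter_lebesgue_int n
     (fun s => (\prod_(i < n.+1) ind (a i) w (nth 0%R (x :: s) i))%:E)) =
     (fun x => ((w ^+ n) * \1_(`[a ord0, (a ord0 + w)%R[) x)%:E).
  apply/funext => x.
  under eq_fun do rewrite big_ord_recl /=.
  rewrite /ind; have [xin|xnin] := boolP (x \in `[a ord0, (a ord0 + w)%R[).
    rewrite indicE xin mulr1.
    under eq_fun do rewrite mul1r.
    exact: (IH (fun i => a (lift ord0 i))).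
  rewrite indicE (negbTE xnin) mulr0.
  under eq_fun do rewrite mul0r.
  exact: iter_cst0.
have := @integralZl_indic _ _ _ mu _ measurableT (fun _ => `[a ord0, (a ord0 + w)%R[) (w ^+ n).
move=> /= ->; last 2 first.
- by rewrite ltNge exprn_ge0 // ltW.
- exact: measurable_itv.
rewrite integral_indic; last first.
  by have := @measurable_itv R (Interval (BLeft (a ord0)) (BLeft (a ord0 + w)%R)).
  done.
rewrite setIT.
have := @lebesgue_measure_itv R (Interval (BLeft (a ord0)) (BLeft (a ord0 + w)%R)).
move=> /= ->; rewrite lte_fin ltrDl w0 -EFinD -EFinM.
by rewrite addrAC subrr add0r exprSr.
Qed.
End iter.
End Helpers.

Theorem proposition1 (R : realType) (n q : nat)
    (F : 'rV[R]_n -> 'rV[R]_q) (Y : seq 'rV[R]_n) (y : 'rV[R]_n) (nu : R)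
    (fmin fmax : 'rV[R]_q) (s : R) :
  Y != [::] ->
  0 < nu ->
  (forall x, x \in y :: Y ->
     forall i : 'I_q, fmin 0 i <= F x 0 i /\ F x 0 i <= fmax 0 i) ->
  (forall i : 'I_q, fmax 0 i - fmin 0 i <= s) ->
  0 < s ->
  (forall x, x \in Y -> ~ vgt (F y) (F x - nu *: const_mx 1)) ->
  ((nu ^+ q)%:E <=
     HI (fmax + s *: const_mx 1)%R (map F (y :: Y))
     - HI (fmax + s *: const_mx 1)%R (map F Y))%E.
Proof.
move=> Yne nu0 hb hs s0 hY.
set rho := fmax + s *: const_mx 1.
have rhoE i : rho 0 i = fmax 0 i + s by rewrite !mxE mulr1.
have hl x : x \in Y -> exists l : 'I_q, F y 0 l + nu <= F x 0 l.
  move=> xY; have := hY x xY; rewrite /vgt => /existsNP [l hl'].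
  exists l; move: hl'; rewrite !mxE mulr1 => /negP; rewrite -leNgt.
  by rewrite lerBrDr.
have yin : y \in y :: Y by rewrite inE eqxx.
have xin x : x \in Y -> x \in y :: Y by move=> xY; rewrite inE xY orbT.
have nus : nu <= s.
  have [x0 x0Y] : exists x0, x0 \in Y.
    by case E: Y Yne => [//|x0 Y'] _; exists x0; rewrite inE eqxx.
  have [l hl0] := hl x0 x0Y.
  have [hy1 _] := hb y yin l; have [_ hx2] := hb x0 (xin x0 x0Y) l.
  by apply: le_trans (hs l); lra.
rewrite /HI /lebesgue_vol.
set U := [set w | exists2 a, a \in map F Y & box a rho w]%classic.
set U' := [set w | exists2 a, a \in map F (y :: Y) & box a rho w]%classic.
set r := fun t : seq R => \row_(i < q) nth 0 t i.
have rE t i : r t 0 i = nth 0 t i by rewrite /r mxE.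
set G := fun t => ((\1_U (r t) : R))%:E.
set G' := fun t => ((\1_U' (r t) : R))%:E.
set B := fun t : seq R => (\prod_(i < q) ind (F y 0 i) nu (nth 0 t i))%:E.
have UU' w : U w -> U' w.
  by case=> a aY ab; exists a => //=; rewrite inE aY orbT.
have key t : (G t + B t <= G' t)%E.
  rewrite /G /G' /B.
  have [hall|hnall] := pselect (forall i : 'I_q, F y 0 i <= nth 0 t i < F y 0 i + nu).
    rewrite (prod_ind1 _ _ (fun i : 'I_q => nth 0 t i)) //.
    have nU : ~ U (r t).
      case=> a /mapP [x xY ->] hbox.
      have [l hl0] := hl x xY.
      have [_ h2] := andP (hall l).
      have [h3 _] := andP (hbox l).
      by move: h3; rewrite rE; lra.
    have inU' : U' (r t).
      exists (F y); first by rewrite map_f.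
      move=> i; rewrite rE rhoE; have /andP [h1 h2] := hall i.
      have [_ h4] := hb y yin i.
      by apply/andP; split => //; lra.
    rewrite !indicE memNset // mem_set //.
    by rewrite -EFinD add0r.
  rewrite (prod_ind0 _ _ (fun i : 'I_q => nth 0 t i)) // adde0 lee_fin.
  rewrite !indicE; have [hU|hU] := pselect (U (r t)).
    by rewrite !mem_set //; exact: UU'.
  by rewrite memNset.
set W := 2 * s + 1.
have W0 : 0 < W by rewrite /W; lra.
have ub t : (G t <= (\prod_(i < q) ind (fmin 0 i) W (nth 0 t i))%:E)%E.
  rewrite /G lee_fin indicE; have [hU|hU] := pselect (U (r t)).
    rewrite mem_set // (prod_ind1 _ _ (fun i : 'I_q => nth 0 t i)) //.
    move=> i; case: hU => a /mapP [x xY ->] hbox.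
    have /andP [h1 h2] := hbox i; move: h1 h2; rewrite rE rhoE => h1 h2.
    have [h3 _] := hb x (xin x xY) i; have := hs i.
    rewrite /W => h5; apply/andP; split; lra.
  by rewrite memNset // prod_ind_ge0.
have G0 t : (0 <= G t)%E by rewrite /G lee_fin indicE.
have B0 t : (0 <= B t)%E by rewrite /B lee_fin prod_ind_ge0.
have Gfin : iter_lebesgue_int q G \is a fin_num.
  rewrite ge0_fin_numE; last exact: iter_ge0.
  apply: (le_lt_trans (iter_le q _ _ G0 ub)).
  by rewrite (iter_box q (fun i => fmin 0 i) W W0) // ltey.
rewrite leeBrDl //.
have := iter_box q (fun i => F y 0 i) nu nu0; rewrite -/B => <-.
apply: le_trans (iter_superadd q _ _ G0 B0) _.
by apply: iter_le => t; [rewrite adde_ge0 | exact: key].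
Qed.
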